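(* Let $G,H\in\mathfrak{D}$ and $\xi\in\mathcal{H}(G,H)$. For every $H'\in\mathfrak{D}$ let $$\Theta_{G,H'}(\xi)=\{\zeta\in\mathcal{H}(G,H'):\mathcal{G}(\zeta)=\mathcal{G}(\xi)\}.$$ Then $\#\Theta_{G,H'}(\xi)=\#\mathcal{S}(\mathcal{G}(\xi),H')$ for every $H'\in\mathfrak{D}$.
   Context: **Digraphs and homomorphisms.** - A digraph $G$ is a pair $(V(G),A(G))$, where $V(G)$ is a finite non-empty set and $A(G)\subseteq V(G)\times V(G)$. Arcs are written $vw$. - An arc $vw$ with $v\ne w$ is proper. - A homomorphism $\xi:G\to H$ is a map $V(G)\to V(H)$ with $\xi(v)\xi(w)\in A(H)$ for all $vw\in A(G)$. $\mathcal{H}(G,H)$ is the set of homomorphisms. - A homomorphism is strict if it maps every proper arc to a proper arc. $\mathcal{S}(G,H)$ is the set of strict homomorphisms. - $\mathfrak{D}$ is the class of all digraphs. **Connectivity.** - Two vertices $u,w$ are adjacent if $uw\in A(G)$ or $wu\in A(G)$. - For $X\subseteq V(G)$ and $v,w\in X$, the vertices $v$ and $w$ are connected in $X$ if $v=w$, or if there are $z_0=v,\dots,z_I=w$ in $X$ with consecutive terms adjacent. - $\gamma_X(v)$ is the set of $w\in X$ connected to $v$ in $X$. - $\Gamma_\xi(v):=\gamma_{\xi^{-1}(\xi(v))}(v)$. **The quotient digraph.** For $\xi\in\mathcal{H}(G,H)$, $\mathcal{G}(\xi)$ is the digraph with: - vertex set $\{\Gamma_\xi(v):v\in V(G)\}$,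 a partition of $V(G)$; - arcs $\mathfrak{a}\mathfrak{b}$ whenever there are $a\in\mathfrak{a}$, $b\in\mathfrak{b}$ with $ab\in A(G)$. *)

(* Defs.v *)
(* A digraph is a finite (non-empty) type T with an arc
   relation e : rel T; A(G) = [set p | e p.1 p.2]. *)
From mathcomp Require Import all_boot.
Set Implicit Arguments. Unset Strict Implicit. Unset Printing Implicit Defensive.

Section Digraphs.

Definition is_hom (T U : finType) (e : rel T) (e' : rel U) (f : T -> U) : bool :=
  [forall x, forall y, e x y ==> e' (f x) (f y)].

Definition is_strict_hom (T U : finType) (e : rel T) (e' : rel U) (f : T -> U) : bool :=
  is_hom e e' f && [forall x, forall y, (e x y && (x != y)) ==> (f x != f y)].

Definition adjIn (T : finType) (e : rel T) (X : {set T}) : rel T :=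
  [rel x y | [&& x \in X, y \in X & e x y || e y x]].

Definition gamma (T : finType) (e : rel T) (X : {set T}) (v : T) : {set T} :=
  [set w in X | connect (adjIn e X) v w].

Definition Gam (T : finType) (U : eqType) (e : rel T) (xi : T -> U) (v : T) : {set T} :=
  gamma e [set w | xi w == xi v] v.

Definition qverts (T : finType) (U : eqType) (e : rel T) (xi : T -> U) : {set {set T}} :=
  [set Gam e xi v | v : T].

Definition qarcs (T : finType) (U : eqType) (e : rel T) (xi : T -> U)
  : {set {set T} * {set T}} :=
  [set p | [&& p.1 \in qverts e xi, p.2 \in qverts e xi &
              [exists a in p.1, exists b in p.2, e a b]]].

Definition qtype (T : finType) (U : eqType) (e : rel T) (xi : T -> U) : finType :=
  {X : {set T} | X \in qverts e xi}.

Definition qrel (T : finType) (U : eqType) (e : rel T) (xi : T -> U)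
  : rel (qtype e xi) :=
  fun X Y => (val X, val Y) \in qarcs e xi.

Definition same_quotient (T : finType) (U U' : eqType) (e : rel T)
  (zeta : T -> U') (xi : T -> U) : bool :=
  (qverts e zeta == qverts e xi) && (qarcs e zeta == qarcs e xi).

Definition Theta (T U U' : finType) (e : rel T) (e' : rel U') (xi : T -> U)
  : {set {ffun T -> U'}} :=
  [set z : {ffun T -> U'} | is_hom e e' z && same_quotient e z xi].

End Digraphs.
Arguments qrel {T U} e xi.
Arguments qtype {T U} e xi.
Arguments Theta {T U U'} e e' xi.

(* Main.v *)
Require Import Defs.
From mathcomp Require Import all_boot.
Set Implicit Arguments. Unset Strict Implicit. Unset Printing Implicit Defensive.

Lemma connect_transfer (T : finType) (r1 r2 : rel T) (P : pred T) v w :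
  P v -> (forall x y, P x -> r1 x y -> P y && r2 x y) ->
  connect r1 v w -> P w && connect r2 v w.
Proof.
move=> Pv H /connectP [p pth ->].
elim: p v Pv pth => [|y p IH] x Px /=; first by rewrite Px connect0.
case/andP=> rxy pth; have /andP[Py r2xy] := H _ _ Px rxy.
have /andP[-> c] := IH _ Py pth.
by rewrite (connect_trans (connect1 r2xy) c).
Qed.

Lemma adjIn_sym (T : finType) (e : rel T) X : connect_sym (adjIn e X).
Proof. by apply: sym_connect_sym => x y; rewrite /adjIn /= andbCA orbC. Qed.

Lemma Gam_self (T : finType) (U0 : eqType) (e : rel T) (f : T -> U0) v :
  v \in Gam e f v.
Proof. by rewrite /Gam /gamma !inE eqxx connect0. Qed.

Lemma Gam_val (T : finType) (U0 : eqType) (e : rel T) (f : T -> U0) v w :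
  w \in Gam e f v -> f w = f v.
Proof. by rewrite /Gam /gamma !inE => /andP[/eqP -> _]. Qed.

Lemma Gam_eq (T : finType) (U0 : eqType) (e : rel T) (f : T -> U0) v w :
  w \in Gam e f v -> Gam e f w = Gam e f v.
Proof.
move=> wv; have fw := Gam_val wv.
move: wv; rewrite /Gam /gamma fw inE => /andP[_ cvw].
apply/setP=> u; rewrite !inE.
by rewrite (same_connect (adjIn_sym _ _) cvw).
Qed.

Section Main.
Variables (T U : finType) (eG : rel T) (xi : T -> U).

Lemma qverts_in v : Gam eG xi v \in qverts eG xi.
Proof. exact: imset_f. Qed.

Definition qof v : qtype eG xi := exist _ (Gam eG xi v) (qverts_in v).

Lemma qof_surj (X : qtype eG xi) : exists v, X = qof v.
Proof.
case: X => X HX; case/imsetP: (HX) => v _ E; exists v; exact: val_inj.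
Qed.

Lemma qof_mem (X : qtype eG xi) a : a \in val X -> X = qof a.
Proof.
case: X => X HX /= aX; case/imsetP: (HX) => v _ E; apply: val_inj => /=.
by rewrite E in aX *; rewrite (Gam_eq aX).
Qed.

Lemma qarcs_eq (U0 : eqType) (z : T -> U0) :
  qverts eG z = qverts eG xi -> qarcs eG z = qarcs eG xi.
Proof. by move=> E; rewrite /qarcs E. Qed.

Variables (U' : finType) (eH' : rel U').

Definition phi (g : {ffun qtype eG xi -> U'}) : {ffun T -> U'} :=
  [ffun v => g (qof v)].

Lemma phi_inj : injective phi.
Proof.
move=> g1 g2 E; apply/ffunP=> X; have [v ->] := qof_surj X.
by have := congr1 (fun h : {ffun T -> U'} => h v) E; rewrite /phi !ffunE.
Qed.

Lemma qrel_of a b : eG a b -> qrel eG xi (qof a) (qof b).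
Proof.
move=> eab; rewrite /qrel /qarcs inE /= !qverts_in /=.
by apply/existsP; exists a; rewrite Gam_self; apply/existsP; exists b;
  rewrite Gam_self eab.
Qed.

Lemma phi_Gam (g : {ffun qtype eG xi -> U'}) : is_strict_hom (qrel eG xi) eH' g ->
  forall v, Gam eG (phi g) v = Gam eG xi v.
Proof.
case/andP=> _ /forallP sh v.
have zval : forall u, u \in Gam eG xi v -> phi g u = phi g v.
  by move=> u uv; rewrite /phi !ffunE; congr (g _); apply: val_inj => /=;
    rewrite (Gam_eq uv).
apply/setP=> w; apply/idP/idP.
- rewrite {1}/Gam /gamma inE => /andP[_ c].
  have : ((w \in Gam eG xi v) && (phi g w == phi g v)) &&
     connect (adjIn eG [set u | xi u == xi v]) v w.
  apply: (connect_transfer (P := fun u => (u \in Gam eG xi v) &&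
       (phi g u == phi g v))) c; first by rewrite Gam_self eqxx.
  + move=> x y /andP[xv /eqP zx].
    rewrite /adjIn /= !inE => /and3P[_ /eqP zy exy].
    have Hy : y \in Gam eG xi v.
      case: (boolP (qof x == qof y)) => [/eqP Exy|nxy].
        by rewrite -(Gam_eq xv); have := congr1 val Exy => /= ->; exact: Gam_self.
      exfalso; case/orP: exy => exy.
        have /forallP/(_ (qof y)) := sh (qof x).
        by rewrite qrel_of // nxy /= /phi !ffunE in zx zy *; rewrite zx -zy eqxx.
      have /forallP/(_ (qof x)) := sh (qof y).
      by rewrite qrel_of // eq_sym nxy /= /phi !ffunE in zx zy *; rewrite zx -zy eqxx.
    move: (Hy); rewrite {1}/Gam /gamma !inE => ->; rewrite zy eqxx (Gam_val xv) (Gam_val Hy) eqxx exy //.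

  by case/andP=> /andP[].
- move=> wv; move: (wv); rewrite {2}/Gam /gamma !inE (zval _ wv) eqxx /=.
  case/andP=> _ c.
  have : (w \in Gam eG xi v) &&
     connect (adjIn eG [set u | phi g u == phi g v]) v w.
  apply: (connect_transfer (P := fun u => u \in Gam eG xi v)) c;
    first by rewrite Gam_self.
  move=> x y xv.
  rewrite /adjIn /= !inE => /and3P[_ /eqP xy exy].
  have yv : y \in Gam eG xi v.
    move: xv; rewrite /Gam /gamma !inE => /andP[/eqP xx c'].
    rewrite xy eqxx /=; apply: connect_trans c' (connect1 _).
    by rewrite /adjIn /= !inE xx xy eqxx exy.
  move: (yv); rewrite {1}/Gam /gamma !inE => ->; rewrite (zval _ xv) (zval _ yv) eqxx exy //.
  by case/andP.
Qed.

End Main.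

Theorem lemma3 (T U : finType) (eG : rel T) (eH : rel U)
  (hT : 0 < #|T|) (hU : 0 < #|U|) (xi : T -> U) (hxi : is_hom eG eH xi) :
  forall (U' : finType) (eH' : rel U'), 0 < #|U'| ->
    #|Theta eG eH' xi| =
    #|[set g : {ffun qtype eG xi -> U'} | is_strict_hom (qrel eG xi) eH' g]|.
Proof.
move=> U' eH' _.
rewrite -(card_imset _ (@phi_inj T U eG xi U')).
congr (#|pred_of_set _|); apply/setP=> z; apply/idP/idP.
- rewrite inE => /andP[hz /andP[/eqP Ev /eqP Ea]].
  have Gz : forall v, Gam eG z v = Gam eG xi v.
    move=> v; have : Gam eG z v \in qverts eG xi by rewrite -Ev imset_f.
    case/imsetP => w _ E.
    have : v \in Gam eG xi w by rewrite -E Gam_self.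
    by move/Gam_eq => ->.
  have [t0 _] := card_gt0P hT.
  pose g := [ffun X : qtype eG xi => z (odflt t0 [pick a in val X])].
  have zg : forall a, z a = g (qof eG xi a).
    move=> a; rewrite ffunE /=.
    case: pickP => [b|H]; last by have := H a; rewrite /= Gam_self.
    by rewrite -Gz => /Gam_val ->.
  apply/imsetP; exists g; last by apply/ffunP=> v; rewrite /phi ffunE; exact: zg.
  rewrite inE; apply/andP; split.
    apply/forallP=> X; apply/forallP=> Y; apply/implyP.
    rewrite /qrel /qarcs inE => /and3P[_ _ /existsP[a /andP[aX /existsP[b /andP[bY eab]]]]].
    rewrite (qof_mem aX) (qof_mem bY) -!zg.
    by move: hz => /forallP/(_ a)/forallP/(_ b)/implyP; apply.
  apply/forallP=> X; apply/forallP=> Y; apply/implyP; case/andP.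
  rewrite /qrel /qarcs inE => /and3P[_ _ /existsP[a /andP[aX /existsP[b /andP[bY eab]]]]].
  rewrite (qof_mem aX) (qof_mem bY) -!zg => nXY.
  apply: contra nXY => /eqP zab; apply/eqP; apply: val_inj => /=.
  rewrite -!Gz.
  have : b \in Gam eG z a.
    rewrite /Gam /gamma !inE zab eqxx /=; apply: connect1.
    by rewrite /adjIn /= !inE zab eqxx eab.
  by move/Gam_eq ->.
- case/imsetP => g; rewrite inE => gS ->.
  have E : qverts eG (phi g) = qverts eG xi.
    by rewrite /qverts; apply: eq_imset => v; exact: (phi_Gam gS).
  rewrite inE; apply/andP; split; last by rewrite /same_quotient E (qarcs_eq E) !eqxx.
  apply/forallP=> a; apply/forallP=> b; apply/implyP=> eab.
  rewrite /phi !ffunE.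
  case/andP: gS => hg _.
  by move: hg => /forallP/(_ (qof eG xi a))/forallP/(_ (qof eG xi b))/implyP; apply; exact: qrel_of.
Qed.
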